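(* For every $\varepsilon>0$, every locally $\varepsilon$-balanced $2$-edge-coloured $K_n$ contains at least $\varepsilon^4n^4/10^5$ copies of $P_3^{\circ}$, $C_4$ or $\overline{C_4}$ (counted together).
   Context: Colours are red and blue. A $2$-edge-coloured $K_n$ is locally $\varepsilon$-balanced if every vertex is incident to at least $\varepsilon n$ red and at least $\varepsilon n$ blue edges. $C_4$ is the $2$-edge-coloured $K_4$ whose red edges form a $4$-cycle (the other two edges blue); $\overline{C_4}$ is $C_4$ with colours swapped. $P_3^{\circ}$ is the $2$-edge-coloured $K_4$ on vertices $1,2,3,4$ in which the edges $12,23,34$ are blue and the edges $13,14,24$ are red. A copy of a coloured graph $H$ in a coloured graph $G$ is an injection of $V(H)$ into $V(G)$ mapping each edge of $H$ to an edge of $G$ of the same colour. *)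

(* Defs.v *)
From HB Require Import structures.
From mathcomp Require Import all_boot all_order all_algebra.
Set Implicit Arguments. Unset Strict Implicit. Unset Printing Implicit Defensive.
Import Order.TTheory GRing.Theory Num.Theory.

(* A 2-edge-coloured K_n: vertex set 'I_n, colour c u v for u <> v;
   true = red, false = blue.  Values on the diagonal are irrelevant. *)
Definition sym_colouring (n : nat) (c : 'I_n -> 'I_n -> bool) : Prop :=
  forall u v : 'I_n, c u v = c v u.

Definition red_deg (n : nat) (c : 'I_n -> 'I_n -> bool) (v : 'I_n) : nat :=
  #|[set u : 'I_n | (u != v) && c v u]|.

Definition blue_deg (n : nat) (c : 'I_n -> 'I_n -> bool) (v : 'I_n) : nat :=
  #|[set u : 'I_n | (u != v) && ~~ c v u]|.

Definition locally_balanced (R : realFieldType) (eps : R) (n : nat)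
    (c : 'I_n -> 'I_n -> bool) : Prop :=
  forall v : 'I_n,
    (eps * n%:R <= (red_deg c v)%:R)%R /\ (eps * n%:R <= (blue_deg c v)%:R)%R.

(* Coloured K_4 patterns on vertices 0,1,2,3 (paper: 1,2,3,4). *)
(* C4: red edges form the 4-cycle 0-1-2-3-0; 02 and 13 blue. *)
Definition C4 (i j : 'I_4) : bool := odd (i + j).
Definition C4bar (i j : 'I_4) : bool := ~~ odd (i + j).
(* P3o: 01,12,23 blue; 02,03,13 red. *)
Definition P3o (i j : 'I_4) : bool := ~~ ((i.+1 == j :> nat) || (j.+1 == i :> nat)).

Definition copies (n : nat) (c : 'I_n -> 'I_n -> bool) (H : 'I_4 -> 'I_4 -> bool)
    : {set {ffun 'I_4 -> 'I_n}} :=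
  [set f : {ffun 'I_4 -> 'I_n} | injectiveb f &&
     [forall i : 'I_4, forall j : 'I_4, (i != j) ==> (c (f i) (f j) == H i j)]].

Definition num_copies (n : nat) (c : 'I_n -> 'I_n -> bool) (H : 'I_4 -> 'I_4 -> bool)
    : nat := #|copies c H|.

(* Main.v *)
Require Import Defs.
From HB Require Import structures.
From mathcomp Require Import all_boot all_order all_algebra.
From mathcomp Require Import zify.
Import Order.TTheory GRing.Theory Num.Theory.

Set Implicit Arguments. Unset Strict Implicit. Unset Printing Implicit Defensive.

Lemma card_sum (T : finType) (P : pred T) : #|[set x | P x]| = \sum_x (P x : nat).
Proof.
rewrite -sum1_card big_mkcond; apply: eq_bigr => x _; rewrite inE; by case: (P x).
Qed.

Definition rr n (c : 'I_n -> 'I_n -> bool) (x w : 'I_n) : nat := ((w != x) && c x w).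
Definition bb n (c : 'I_n -> 'I_n -> bool) (x w : 'I_n) : nat := ((w != x) && ~~ c x w).
Definition rd n (c : 'I_n -> 'I_n -> bool) x := \sum_w rr c x w.
Definition bd n (c : 'I_n -> 'I_n -> bool) x := \sum_w bb c x w.
Definition al n (c : 'I_n -> 'I_n -> bool) x y := \sum_w rr c x w * bb c y w.
Definition cod n (c : 'I_n -> 'I_n -> bool) x y := \sum_w bb c x w * bb c y w.
Definition altn n (c : 'I_n -> 'I_n -> bool) := \sum_x \sum_y al c x y * al c y x.

Lemma rd_red n (c : 'I_n -> 'I_n -> bool) v : red_deg c v = rd c v.
Proof. by rewrite /red_deg card_sum. Qed.
Lemma bd_blue n (c : 'I_n -> 'I_n -> bool) v : blue_deg c v = bd c v.
Proof. by rewrite /blue_deg card_sum. Qed.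

Lemma bb_sym n (c : 'I_n -> 'I_n -> bool) : sym_colouring c -> forall x v, bb c v x = bb c x v.
Proof. by move=> Hs x v; rewrite /bb eq_sym Hs. Qed.

Lemma sum_eq1 n (x : 'I_n) : \sum_w ((w == x) : nat) = 1.
Proof.
rewrite (bigD1 x) //= eqxx big1 // => w /negbTE ->; by [].
Qed.

Lemma sum_al_sq n (c : 'I_n -> 'I_n -> bool) : sym_colouring c -> forall u,
  \sum_v al c u v * al c u v = \sum_x \sum_y rr c u x * rr c u y * cod c x y.
Proof.
move=> Hs u.
transitivity (\sum_v \sum_x \sum_y rr c u x * bb c v x * (rr c u y * bb c v y)).
  apply: eq_bigr => v _; rewrite /al big_distrl; apply: eq_bigr => x _ /=.
  by rewrite big_distrr.
rewrite exchange_big; apply: eq_bigr => x _; rewrite exchange_big.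
apply: eq_bigr => y _; rewrite /cod big_distrr; apply: eq_bigr => v _ /=.
by rewrite (bb_sym Hs x v) (bb_sym Hs y v) mulnACA.
Qed.

Lemma bd_le n (c : 'I_n -> 'I_n -> bool) x y : bd c y <= al c x y + cod c x y + 1.
Proof.
rewrite -(sum_eq1 x) /bd /al /cod -!big_split /=; apply: leq_sum => w _.
rewrite /rr /bb; case: (w =P x) => [->|/eqP nx]; first by case: (_ && _); rewrite ?addn1.
by case: (c x w); case: (_ && _).
Qed.

Lemma sum_rr_sq n (c : 'I_n -> 'I_n -> bool) u :
  \sum_x \sum_y rr c u x * rr c u y = rd c u * rd c u.
Proof. by rewrite /rd big_distrl; apply: eq_bigr => x _; rewrite big_distrr. Qed.

Lemma al_le_rd n (c : 'I_n -> 'I_n -> bool) u v : al c u v <= rd c u.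
Proof. apply: leq_sum => w _; rewrite /rr /bb; by case: (_ && _); case: (_ && _). Qed.

Lemma rd_split n (c : 'I_n -> 'I_n -> bool) u v :
  rd c u = al c u v + \sum_w (((w != u) && (w != v) && c u w && c v w) : nat)
           + ((u != v) && c u v).
Proof.
rewrite -[X in _ + X]muln1 -(sum_eq1 v) big_distrr /= /rd /al -!big_split /=.
apply: eq_bigr => w _; rewrite /rr /bb.
case: (w =P v) => [->|/eqP nv] /=.
  by rewrite andbF eq_sym muln1 muln0 !addn0 add0n.
rewrite muln0 addn0; case: (w != u) => //=; by case: (c u w); case: (c v w).
Qed.

Lemma al_mono n (c : 'I_n -> 'I_n -> bool) : sym_colouring c -> forall u v,
  rd c u <= rd c v -> al c u v <= al c v u.
Proof.
move=> Hs u v; rewrite (rd_split c u v) (rd_split c v u).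
have -> : \sum_w (((w != v) && (w != u) && c v w && c u w) : nat) =
          \sum_w (((w != u) && (w != v) && c u w && c v w) : nat).
  apply: eq_bigr => w _; by case: (w != v); case: (w != u); case: (c v w); case: (c u w).
rewrite eq_sym Hs; lia.
Qed.

Lemma sub_sum (T : finType) (P : pred T) (F : T -> nat) : \sum_(i | P i) F i <= \sum_i F i.
Proof. rewrite [X in _ <= X](bigID P) /=; exact: leq_addr. Qed.

Lemma exists_L n (f : 'I_n -> nat) m : m <= n ->
  m <= #|[set u | #|[set v | f v < f u]| < m]|.
Proof.
move=> Hm; set L := [set u | _]; rewrite leqNgt; apply/negP => HL.
have : 0 < #|~: L|.
  have := cardsC L; rewrite card_ord => H; lia.
case/card_gt0P => u0 Hu0.
case: (@arg_minnP _ u0 (mem (~: L)) f Hu0) => u Hu Hmin.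
have : [set v | f v < f u] \subset L.
  apply/subsetP => v; rewrite inE => Hv; apply/negPn/negP => Hv'.
  have := Hmin v; rewrite inE => /(_ _); rewrite inE Hv' => /(_ isT); lia.
move/subset_leq_card => Hc.
have Hd : #|[set v | f v < f u]| < m by apply: leq_ltn_trans HL.
by move: Hu; rewrite /= inE /L inE Hd.
Qed.

Lemma alt_ge n (c : 'I_n -> 'I_n -> bool) : sym_colouring c -> forall (L : {set 'I_n}),
  \sum_(u in L) \sum_(v | rd c u <= rd c v) al c u v * al c u v <= altn c.
Proof.
move=> Hs L; apply: leq_trans (sub_sum _ _) _; apply: leq_sum => u _.
apply: leq_trans (sub_sum (fun v => rd c u <= rd c v) _); apply: leq_sum => v Hv.
by rewrite leq_mul2l al_mono ?orbT.
Qed.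

Lemma term_le_sum (T : finType) (P : pred T) (F : T -> nat) i : P i -> F i <= \sum_(j | P j) F j.
Proof. by move=> Hi; rewrite (bigD1 i) //= leq_addr. Qed.

Lemma sum_pos_ex (T : finType) (F : T -> nat) : 0 < \sum_i F i -> exists i, 0 < F i.
Proof.
rewrite lt0n sum_nat_eq0 negb_forall => /existsP [i Hi]; exists i; by rewrite lt0n.
Qed.

Lemma cod_sym n (c : 'I_n -> 'I_n -> bool) x y : cod c x y = cod c y x.
Proof. by apply: eq_bigr => w _; rewrite mulnC. Qed.

Definition nsmall n (c : 'I_n -> 'I_n -> bool) u t :=
  \sum_x \sum_y rr c u x * rr c u y * (cod c x y < t).

Lemma caseB n (c : 'I_n -> 'I_n -> bool) : sym_colouring c -> forall E u t,
  (forall v, E <= bd c v) -> nsmall c u t * ((E - t) * (E - t)) <= altn c.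
Proof.
move=> Hs E u t HE; rewrite /nsmall /altn big_distrl /=; apply: leq_sum => x _.
rewrite big_distrl /=; apply: leq_sum => y _.
rewrite /rr; case: (_ && c u x); case: (_ && c u y); rewrite ?mul0n //=.
case Hc: (cod c x y < t); rewrite ?mul0n // !mul1n.
have h1 := bd_le c x y; have h2 := bd_le c y x; rewrite cod_sym in h2.
have e1 := HE x; have e2 := HE y.
apply: leq_mul; lia.
Qed.

Lemma caseA_sum n (c : 'I_n -> 'I_n -> bool) : sym_colouring c -> forall u t,
  t * (rd c u * rd c u) <= \sum_v al c u v * al c u v + t * nsmall c u t.
Proof.
move=> Hs u t; rewrite sum_al_sq // -sum_rr_sq /nsmall !big_distrr -big_split /=.
apply: leq_sum => x _; rewrite !big_distrr -big_split /=; apply: leq_sum => y _.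
rewrite /rr; case: (_ && c u x); case: (_ && c u y); rewrite ?mul0n ?muln0 //= !mul1n.
case Hc: (cod c x y < t); rewrite ?muln1 ?muln0 ?addn0 ?leq_addl //.
by rewrite leqNgt Hc.
Qed.

Lemma down_bound n (c : 'I_n -> 'I_n -> bool) u :
  \sum_v al c u v * al c u v <= \sum_(v | rd c u <= rd c v) al c u v * al c u v
     + #|[set v | rd c v < rd c u]| * (rd c u * rd c u).
Proof.
rewrite (bigID (fun v => rd c u <= rd c v)) /= leq_add2l card_sum big_distrl /=.
rewrite big_mkcond /=; apply: leq_sum => v _; rewrite ltnNge.
case: (rd c u <= rd c v) => //=; rewrite mul1n.
by apply: leq_mul; apply: al_le_rd.
Qed.

Lemma rd_le_n n (c : 'I_n -> 'I_n -> bool) v : rd c v <= n.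
Proof.
rewrite -[X in _ <= X]card_ord -sum1_card; apply: leq_sum => w _; rewrite /rr; by case: (_ && _).
Qed.

Lemma core n (c : 'I_n -> 'I_n -> bool) : sym_colouring c -> 0 < n -> forall E,
  (forall v, E <= rd c v /\ E <= bd c v) ->
  (E %/ 8) * (E %/ 8) * (E * E) <= altn c.
Proof.
move=> Hs Hn E HE; set q := E %/ 8.
have Hq : 8 * q <= E by rewrite /q mulnC leq_divM.
case: (boolP [exists u, rd c u * rd c u < 2 * nsmall c u (4 * q)]).
  case/existsP => u Hu.
  have hB := caseB Hs u (4 * q) (fun v => proj2 (HE v)).
  have hE : E * E <= rd c u * rd c u by apply: leq_mul; case: (HE u).
  have h4 : 4 * q <= E - 4 * q by lia.
  have h44 : (4 * q) * (4 * q) <= (E - 4 * q) * (E - 4 * q) by apply: leq_mul.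
  set N := nsmall c u (4 * q) in Hu hB.
  set X := (E - 4 * q) * (E - 4 * q) in h44 hB.
  have : (E * E) * (4 * q * (4 * q)) <= 2 * N * X.
    apply: leq_mul; last exact: h44. apply: leq_trans hE _; exact: ltnW.
  move=> H1.
  have H2 : 2 * N * X <= 2 * altn c by rewrite -mulnA leq_mul2l hB orbT.
  have H3 := leq_trans H1 H2.
  nia.
rewrite negb_exists => /forallP Hall.
have HqE : q <= n.
  apply: leq_trans (leq_div _ _) _; apply: leq_trans (proj1 (HE (Ordinal Hn))) _; exact: rd_le_n.
have HL := exists_L (rd c) HqE.
set L := [set u | _] in HL.
apply: leq_trans (alt_ge Hs L).
apply: leq_trans (_ : \sum_(u in L) q * (E * E) <= _).
  by rewrite sum_nat_const -mulnA leq_mul.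
apply: leq_sum => u; rewrite inE => HuL.
have hA := caseA_sum Hs u (4 * q).
have hD := down_bound c u.
have hN := Hall u; rewrite -leqNgt in hN.
have hE : E * E <= rd c u * rd c u by apply: leq_mul; case: (HE u).
set D := #|_| in HuL hD.
set Y := rd c u * rd c u in hA hD hN hE.
set N := nsmall c u (4 * q) in hA hN.
set S := \sum_v _ in hA hD.
set U := \sum_(v | _) _ in hD *.
apply: leq_trans (_ : q * Y <= U); first by rewrite leq_mul2l hE orbT.
have : 4 * q * Y <= U + D * Y + 4 * q * N by apply: leq_trans hA _; rewrite leq_add2r.
have hDY : D * Y <= (q - 1) * Y by apply: leq_mul => //; lia.
have hNY : 2 * (4 * q * N) <= 4 * q * Y by rewrite mulnCA leq_mul2l hN orbT.
nia.
Qed.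

Lemma alt_pos n (c : 'I_n -> 'I_n -> bool) : sym_colouring c -> 0 < n ->
  (forall v, 1 <= rd c v /\ 1 <= bd c v) -> 0 < altn c.
Proof.
move=> Hs Hn HE.
have HL := @exists_L n (rd c) 1 Hn.
case/card_gt0P: HL => u; rewrite inE ltnS leqn0 => /eqP /cards0_eq H0.
have Hmin : forall v, rd c u <= rd c v.
  move=> v; rewrite leqNgt; apply/negP => Hv.
  have : v \in [set v | rd c v < rd c u] by rewrite inE.
  by rewrite H0 inE.
case: (sum_pos_ex (proj1 (HE u))) => x Hx.
case: (sum_pos_ex (proj2 (HE x))) => v Hv.
have Hal : 0 < al c u v.
  rewrite /al (bigD1 x) //= (bb_sym Hs x v); apply: leq_trans (leq_addr _ _).
  by rewrite muln_gt0 Hx Hv.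
apply: leq_trans (alt_ge Hs [set u]); rewrite big_set1.
apply: leq_trans (term_le_sum _ (Hmin v)); by rewrite muln_gt0 Hal.
Qed.

Lemma nat_main n (c : 'I_n -> 'I_n -> bool) : sym_colouring c -> 0 < n -> forall E,
  (forall v, E <= rd c v /\ E <= bd c v) -> E * E * (E * E) <= 2401 * altn c.
Proof.
move=> Hs Hn E HE.
have Hc := core Hs Hn HE.
set q := E %/ 8 in Hc.
have Hq1 : E < 8 * q + 8 by rewrite /q; lia.
case: (posnP q) => [q0|qpos].
  case: (posnP E) => [->|Epos]; first by [].
  have hp : 0 < altn c.
    apply: alt_pos => // v; case: (HE v) => a b; split; exact: leq_trans Epos _.
  have hE7 : E <= 7 by lia.
  have : E * E * (E * E) <= 7 * 7 * (7 * 7) by apply: leq_mul; apply: leq_mul.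
  move=> h; apply: leq_trans h _; rewrite -[X in X <= _]muln1; exact: leq_mul.
have h15 : E <= 15 * q by lia.
have : E * E * (E * E) <= (15 * q) * (15 * q) * (E * E) by apply: leq_mul => //; apply: leq_mul.
move=> h; apply: leq_trans h _.
have -> : 15 * q * (15 * q) * (E * E) = 225 * (q * q * (E * E)) by nia.
apply: leq_trans (_ : 225 * altn c <= _); first by rewrite leq_mul2l Hc orbT.
by apply: leq_mul.
Qed.

Definition mk n (a0 a1 a2 a3 : 'I_n) : {ffun 'I_4 -> 'I_n} :=
  [ffun i : 'I_4 => if val i == 0 then a0 else if val i == 1 then a1
                    else if val i == 2 then a2 else a3].

Lemma mk_inj n (a0 a1 a2 a3 b0 b1 b2 b3 : 'I_n) :
  mk a0 a1 a2 a3 = mk b0 b1 b2 b3 -> [/\ a0 = b0, a1 = b1, a2 = b2 & a3 = b3].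
Proof.
move=> H.
have h0 := congr1 (fun f : {ffun 'I_4 -> 'I_n} => f (@Ordinal 4 0 isT)) H.
have h1 := congr1 (fun f : {ffun 'I_4 -> 'I_n} => f (@Ordinal 4 1 isT)) H.
have h2 := congr1 (fun f : {ffun 'I_4 -> 'I_n} => f (@Ordinal 4 2 isT)) H.
have h3 := congr1 (fun f : {ffun 'I_4 -> 'I_n} => f (@Ordinal 4 3 isT)) H.
by move: h0 h1 h2 h3; rewrite /mk !ffunE /=.
Qed.

Lemma mk_copies n (c : 'I_n -> 'I_n -> bool) (h : nat -> nat -> bool) :
  sym_colouring c -> (forall x y, h x y = h y x) ->
  forall a0 a1 a2 a3 : 'I_n,
  a0 != a1 -> a0 != a2 -> a0 != a3 -> a1 != a2 -> a1 != a3 -> a2 != a3 ->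
  c a0 a1 = h 0 1 -> c a0 a2 = h 0 2 -> c a0 a3 = h 0 3 ->
  c a1 a2 = h 1 2 -> c a1 a3 = h 1 3 -> c a2 a3 = h 2 3 ->
  mk a0 a1 a2 a3 \in copies c (fun i j : 'I_4 => h i j).
Proof.
move=> Hs hs a0 a1 a2 a3 d01 d02 d03 d12 d13 d23 e01 e02 e03 e12 e13 e23.
have d10 := d01; rewrite eq_sym in d10. have d20 := d02; rewrite eq_sym in d20.
have d30 := d03; rewrite eq_sym in d30. have d21 := d12; rewrite eq_sym in d21.
have d31 := d13; rewrite eq_sym in d31. have d32 := d23; rewrite eq_sym in d32.
rewrite inE; apply/andP; split.
  apply/injectiveP => -[[|[|[|[|i]]]] Hi] [[|[|[|[|j]]]] Hj] //; rewrite /mk !ffunE /=;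
    try (by move=> _; apply: val_inj);
    try (by move/eqP; rewrite ?(negbTE d01, negbTE d02, negbTE d03, negbTE d12, negbTE d13,
       negbTE d23, negbTE d10, negbTE d20, negbTE d30, negbTE d21, negbTE d31, negbTE d32)).
apply/forallP => -[[|[|[|[|i]]]] Hi]; apply/forallP => -[[|[|[|[|j]]]] Hj] //;
  rewrite /mk !ffunE /=; try done; apply/eqP;
  rewrite ?e01 ?e02 ?e03 ?e12 ?e13 ?e23 // Hs ?e01 ?e02 ?e03 ?e12 ?e13 ?e23 hs //.
Qed.

Lemma sum_pair (A B : finType) (F : A * B -> nat) : \sum_t F t = \sum_a \sum_b F (a, b).
Proof. by rewrite pair_bigA; apply: eq_bigr => -[a b]. Qed.

Definition altb n (c : 'I_n -> 'I_n -> bool) (t : 'I_n * 'I_n * 'I_n * 'I_n) : bool :=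
  let: (a, b, x, d) := t in
  [&& (b != a) && c a b, (b != x) && ~~ c x b, (d != x) && c x d & (d != a) && ~~ c a d].

Lemma altn_card n (c : 'I_n -> 'I_n -> bool) :
  altn c = #|[set t | altb c t]|.
Proof.
rewrite card_sum sum_pair sum_pair sum_pair /altn; apply: eq_bigr => a _.
rewrite exchange_big; apply: eq_bigr => x _; rewrite /al big_distrl; apply: eq_bigr => b _ /=.
rewrite big_distrr; apply: eq_bigr => d _ /=.
rewrite /rr /bb; by case: (_ && _); case: (_ && _); case: (_ && _); case: (_ && _).
Qed.

Lemma img_le n (c : 'I_n -> 'I_n -> bool) (H : 'I_4 -> 'I_4 -> bool)
  (A : {set 'I_n * 'I_n * 'I_n * 'I_n}) (g : 'I_n * 'I_n * 'I_n * 'I_n -> {ffun 'I_4 -> 'I_n}) :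
  injective g -> (forall t, t \in A -> g t \in copies c H) -> #|A| <= num_copies c H.
Proof.
move=> gi HA; rewrite -(card_imset A gi); apply: subset_leq_card.
apply/subsetP => y /imsetP [t Ht ->]; exact: HA.
Qed.

Ltac mkinj := let t := fresh "t" in let u := fresh "u" in
  move=> [[[? ?] ?] ?] [[[? ?] ?] ?] /mk_inj [-> -> -> ->]; done.

Lemma alt_le n (c : 'I_n -> 'I_n -> bool) : sym_colouring c ->
  altn c <= 2 * (num_copies c P3o + num_copies c C4 + num_copies c C4bar).
Proof.
move=> Hs; rewrite altn_card; set A := [set t | altb c t].
set SX := [set t : 'I_n * 'I_n * 'I_n * 'I_n | c t.1.1.1 t.1.2].
set SY := [set t : 'I_n * 'I_n * 'I_n * 'I_n | c t.1.1.2 t.2].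
rewrite -(cardsID SX A) -(cardsID SY (A :&: SX)) -(cardsID SY (A :\: SX)).
have F : forall a b x d, altb c (a, b, x, d) ->
   [/\ [/\ a != b, b != a, a != x & x != a], [/\ a != d, d != a, b != x & x != b],
       [/\ b != d, d != b, x != d & d != x],
       [/\ c a b, c b a, c x b = false & c b x = false] &
       [/\ c x d, c d x, c a d = false & c d a = false]].
  move=> a b x d /= /and4P [/andP [ba ab] /andP [bx /negbTE xb]
     /andP [dx xd] /andP [da /negbTE ad]].
  have ax : a != x by apply/eqP => E; move: ab; rewrite E xb.
  have bd : b != d by apply/eqP => E; move: ab; rewrite E ad.
  have ab0 : a != b by rewrite eq_sym. have xa : x != a by rewrite eq_sym.
  have ad0 : a != d by rewrite eq_sym. have xb0 : x != b by rewrite eq_sym.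
  have db : d != b by rewrite eq_sym. have xd0 : x != d by rewrite eq_sym.
  have cba : c b a by rewrite Hs. have cbx : c b x = false by rewrite Hs.
  have cdx : c d x by rewrite Hs. have cda : c d a = false by rewrite Hs.
  by split; split.
have h1 : #|(A :&: SX) :&: SY| <= num_copies c C4.
  apply: (img_le (g := fun t => let: (a, b, x, d) := t in mk a b d x)); first by mkinj.
  move=> [[[a b] x] d] Ht; rewrite !inE /= in Ht; move: Ht => /andP [/andP [HA Hx] Hy].
  have [[? ? ? ?] [? ? ? ?] [? ? ? ?] [? ? ? ?] [? ? ? ?]] := F a b x d HA.
  have ? : c x a by rewrite Hs. have ? : c d b by rewrite Hs.
  change (mk a b d x \in copies c (fun i j : 'I_4 => odd (i + j))); by apply: (@mk_copies n c (fun i j => odd (i + j))) => //=; move=> *; rewrite addnC.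
have h2 : #|(A :&: SX) :\: SY| <= num_copies c P3o.
  apply: (img_le (g := fun t => let: (a, b, x, d) := t in mk x b d a)); first by mkinj.
  move=> [[[a b] x] d] Ht; rewrite !inE /= in Ht; move: Ht => /andP [/negbTE Hy /andP [HA Hx]].
  have [[? ? ? ?] [? ? ? ?] [? ? ? ?] [? ? ? ?] [? ? ? ?]] := F a b x d HA.
  have ? : c x a by rewrite Hs. have ? : c d b = false by rewrite Hs.
  change (mk x b d a \in copies c (fun i j : 'I_4 => ~~ ((i.+1 == j) || (j.+1 == i)))); apply: (@mk_copies n c (fun i j => ~~ ((i.+1 == j) || (j.+1 == i)))) => //=.
  by move=> i j; rewrite orbC.
have h3 : #|(A :\: SX) :&: SY| <= num_copies c P3o.
  apply: (img_le (g := fun t => let: (a, b, x, d) := t in mk b x a d)); first by mkinj.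
  move=> [[[a b] x] d] Ht; rewrite !inE /= in Ht; move: Ht => /andP [/andP [/negbTE Hx HA] Hy].
  have [[? ? ? ?] [? ? ? ?] [? ? ? ?] [? ? ? ?] [? ? ? ?]] := F a b x d HA.
  have ? : c x a = false by rewrite Hs. have ? : c d b by rewrite Hs.
  change (mk b x a d \in copies c (fun i j : 'I_4 => ~~ ((i.+1 == j) || (j.+1 == i)))); apply: (@mk_copies n c (fun i j => ~~ ((i.+1 == j) || (j.+1 == i)))) => //=.
  by move=> i j; rewrite orbC.
have h4 : #|(A :\: SX) :\: SY| <= num_copies c C4bar.
  apply: (img_le (g := fun t => let: (a, b, x, d) := t in mk a x b d)); first by mkinj.
  move=> [[[a b] x] d] Ht; rewrite !inE /= in Ht; move: Ht => /andP [/negbTE Hy /andP [/negbTE Hx HA]].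
  have [[? ? ? ?] [? ? ? ?] [? ? ? ?] [? ? ? ?] [? ? ? ?]] := F a b x d HA.
  have ? : c x a = false by rewrite Hs. have ? : c d b = false by rewrite Hs.
  change (mk a x b d \in copies c (fun i j : 'I_4 => ~~ odd (i + j))); by apply: (@mk_copies n c (fun i j => ~~ odd (i + j))) => //=; move=> *; rewrite addnC.
lia.
Qed.

Lemma nat_final n (c : 'I_n -> 'I_n -> bool) : sym_colouring c -> 0 < n -> forall E,
  (forall v, E <= rd c v /\ E <= bd c v) ->
  E * E * (E * E) <= 10 ^ 5 * (num_copies c P3o + num_copies c C4 + num_copies c C4bar).
Proof.
move=> Hs Hn E HE; have h1 := nat_main Hs Hn HE; have h2 := alt_le Hs.
apply: leq_trans h1 _; apply: leq_trans (_ : 2401 * (2 * (num_copies c P3o + num_copies c C4 + num_copies c C4bar)) <= _).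
  by rewrite leq_mul2l h2 orbT.
by rewrite mulnA leq_mul2r; apply/orP; right.
Qed.

Unset Implicit Arguments.
Local Open Scope ring_scope.

Theorem proposition2p2 (R : realFieldType) (eps : R) (n : nat)
    (c : 'I_n -> 'I_n -> bool) :
  0 < eps -> sym_colouring c -> locally_balanced eps c ->
  eps ^+ 4 * n%:R ^+ 4 / 10 ^+ 5 <=
    (num_copies c P3o + num_copies c C4 + num_copies c C4bar)%:R.
Proof.
move=> He Hs Hb.
case: (posnP n) => [n0|Hn].
  have -> : n%:R = 0 :> R by rewrite n0.
  by rewrite expr0n /= mulr0 mul0r ler0n.
set S := (_ + _ + _)%N.
pose v0 := Ordinal Hn.
pose v1 := [arg min_(v < v0) minn (rd c v) (bd c v)].
pose E := minn (rd c v1) (bd c v1).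
have HE : forall v, (E <= rd c v /\ E <= bd c v)%N.
  move=> v; rewrite /E /v1; case: arg_minnP => // u _ Hu.
  have := Hu v isT; rewrite !leq_min => /andP [h1 h2].
  by split.
have hEN := nat_final Hs Hn HE.
have hx : eps * n%:R <= E%:R.
  case: (Hb v1); rewrite rd_red bd_blue /E => h1 h2.
  by rewrite /minn; case: ifP.
have hx0 : 0 <= eps * n%:R by rewrite mulr_ge0 ?ler0n // ltW.
have -> : eps ^+ 4 * n%:R ^+ 4 = (eps * n%:R) * (eps * n%:R) * ((eps * n%:R) * (eps * n%:R)).
  by rewrite -exprMn !exprS expr0 mulr1 !mulrA.
rewrite ler_pdivrMr ?exprn_gt0 ?ltr0n //.
apply: le_trans (_ : E%:R * E%:R * (E%:R * E%:R) <= _).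
  by apply: ler_pM; try apply: mulr_ge0; try apply: ler_pM.
rewrite -!natrM -natrX -natrM ler_nat mulnC; exact: hEN.
Qed.
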